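(* There exist nonatomic routing games with affine cost functions (i.e., $c_e(x)=t_e+a_ex$ with $t_e,a_e\in\mathbb{R}_+$) that do not admit a non-negative demand-independent optimal toll (DIOT).
   Context: A nonatomic routing game consists of a finite directed multigraph $\mathcal{G}=(\mathcal{V},\mathcal{E})$, a finite set $\mathcal{I}$ of origin-destination pairs $i$ with origin $o^i$ and destination $d^i$, and nondecreasing continuous cost functions $c_e:\mathbb{R}_+\to\mathbb{R}_+$. $\mathcal{P}^i$ is the set of simple $o^i$–$d^i$ paths. For a demand vector $\boldsymbol{\mu}\in\mathbb{R}_+^{\mathcal{I}}$, feasible flows are $\boldsymbol{f}\in\mathbb{R}_+^{\mathcal{P}}$ with $\sum_{p\in\mathcal{P}^i}f_p=\mu^i$; loads $x_e=\sum_{p\ni e}f_p$; path costs $c_p=\sum_{e\in p}c_e(x_e)$. A Wardrop equilibrium is a feasible flow where every used path of each pair $i$ has cost at most that of any other path in $\mathcal{P}^i$. The total cost is $L(\boldsymbol{f})=\sum_p f_pc_p(\boldsymbol{f})$; a system optimum minimizes $L$ over feasible flows. For a toll vector $\boldsymbol{\tau}\in\mathbb{R}^{\mathcal{E}}$, the tolled game has edge costs $c_e(x)+\tau_e$. $\boldsymbol{\tau}$ is a DIOT if for every demand vector $\boldsymbol{\mu}\in\mathbb{R}_+^{\mathcal{I}}$ every Wardrop equilibrium of the tolled game with demand $\boldsymbol{\mu}$ is a system optimum of the untolled game for demand $\boldsymbol{\mu}$. It is non-negative if $\tau_e\ge0$ for all $e$. *)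

(* Defs.v *)
From HB Require Import structures.
From mathcomp Require Import all_boot all_order all_algebra.
From Stdlib Require Import Rdefinitions.
From mathcomp Require Import Rstruct.
Set Implicit Arguments. Unset Strict Implicit. Unset Printing Implicit Defensive.
Import Order.TTheory GRing.Theory Num.Theory.
Local Open Scope ring_scope.

Section Routing.
Variables (V E I : finType) (src dst : E -> V) (o d : I -> V).

Fixpoint is_walk (u v : V) (p : seq E) : bool :=
  if p is e :: p' then (src e == u) && is_walk (dst e) v p' else u == v.

Definition is_simple_path (u v : V) (p : seq E) : bool :=
  is_walk u v p && uniq (u :: [seq dst e | e <- p]).

Fixpoint seqs_upto (n : nat) : seq (seq E) :=
  if n is n'.+1 then [::] :: [seq e :: p | e <- enum E, p <- seqs_upto n']
  else [:: [::]].

(* P^i : the simple o^i-d^i paths (they have at most #|V| - 1 edges) *)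
Definition paths (i : I) : seq (seq E) :=
  [seq p <- seqs_upto #|V| | is_simple_path (o i) (d i) p].

(* a path flow: f i p is the flow of pair i on path p (only p \in paths i matters) *)
Definition feasible (mu : I -> R) (f : I -> seq E -> R) : Prop :=
  forall i, (forall p, p \in paths i -> 0 <= f i p) /\
            \sum_(p <- paths i) f i p = mu i.

Definition load (f : I -> seq E -> R) (e : E) : R :=
  \sum_i \sum_(p <- paths i | e \in p) f i p.

Definition path_cost (c : E -> R -> R) (f : I -> seq E -> R) (p : seq E) : R :=
  \sum_(e <- p) c e (load f e).

Definition wardrop (c : E -> R -> R) (mu : I -> R) (f : I -> seq E -> R) : Prop :=
  feasible mu f /\
  forall i p q, p \in paths i -> q \in paths i -> 0 < f i p ->
    path_cost c f p <= path_cost c f q.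

Definition total_cost (c : E -> R -> R) (f : I -> seq E -> R) : R :=
  \sum_i \sum_(p <- paths i) f i p * path_cost c f p.

Definition system_optimum (c : E -> R -> R) (mu : I -> R) (f : I -> seq E -> R) : Prop :=
  feasible mu f /\ forall g, feasible mu g -> total_cost c f <= total_cost c g.

Definition is_DIOT (c : E -> R -> R) (tau : E -> R) : Prop :=
  forall mu : I -> R, (forall i, 0 <= mu i) ->
  forall f, wardrop (fun e x => c e x + tau e) mu f -> system_optimum c mu f.

End Routing.

(* Main.v *)
Require Import Defs.
From HB Require Import structures.
From mathcomp Require Import all_boot all_order all_algebra.
From Stdlib Require Import Rdefinitions.
From mathcomp Require Import Rstruct ring lra.
Import Order.TTheory GRing.Theory Num.Theory.
Local Open Scope ring_scope.

Notation V := (ordinal 3).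
Notation E := (ordinal 4).
Definition ea : E := @Ordinal 4 0 isT.
Definition eb : E := @Ordinal 4 1 isT.
Definition ec : E := @Ordinal 4 2 isT.
Definition ed : E := @Ordinal 4 3 isT.
Definition vu : V := @Ordinal 3 0 isT.
Definition vv : V := @Ordinal 3 1 isT.
Definition vw : V := @Ordinal 3 2 isT.
Definition src (e : E) : V := if e == ea then vu else if e == eb then vv else if e == ec then vu else vw.
Definition dst (e : E) : V := if e == ea then vv else if e == eb then vw else if e == ec then vw else vv.
Definition o (i : bool) : V := vu.
Definition d (i : bool) : V := if i then vw else vv.
Lemma enum4 : enum E = [:: ea; eb; ec; ed].
Proof. by apply: (inj_map val_inj); rewrite val_enum_ord. Qed.
Lemma paths_true : paths src dst o d true = [:: [:: ea; eb]; [:: ec]].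
Proof. rewrite /paths card_ord /= enum4. by apply/eqP; vm_compute. Qed.
Lemma paths_false : paths src dst o d false = [:: [:: ea]; [:: ec; ed]].
Proof. rewrite /paths card_ord /= enum4. by apply/eqP; vm_compute. Qed.

Definition Pab := [:: ea; eb].
Definition Pc := [:: ec].
Definition Pa := [:: ea].
Definition Pcd := [:: ec; ed].
Definition tt_ (e : E) : R := if (e == eb) || (e == ed) then 1 else 0.
Definition aa (e : E) : R := 1 - tt_ e.


Lemma loadE (f : bool -> seq E -> R) :
  [/\ load src dst o d f ea = f true Pab + f false Pa,
      load src dst o d f eb = f true Pab,
      load src dst o d f ec = f true Pc + f false Pcd &
      load src dst o d f ed = f false Pcd].
Proof.
rewrite /load !big_bool paths_true paths_false !big_cons !big_nil /=.
split; rewrite /Pab /Pa /Pc /Pcd; lra.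
Qed.

Lemma tc_eq (cc : E -> R -> R) (f : bool -> seq E -> R) :
  total_cost src dst o d cc f =
  f true Pab * (cc ea (f true Pab + f false Pa) + cc eb (f true Pab)) + f true Pc * cc ec (f true Pc + f false Pcd) +
  (f false Pa * cc ea (f true Pab + f false Pa) + f false Pcd * (cc ec (f true Pc + f false Pcd) + cc ed (f false Pcd))).
Proof.
have [h1 h2 h3 h4] := loadE f.
rewrite /total_cost /path_cost big_bool paths_true paths_false !big_cons !big_nil /= h1 h2 h3 h4.
rewrite /Pab /Pa /Pc /Pcd; lra.
Qed.

Definition F (b : bool) (x1 x2 : R) (i : bool) (p : seq E) : R :=
  if i == b then (if p \in [:: Pab; Pa] then x1 else x2) else 0.
Definition MU (b : bool) (m : R) (i : bool) : R := if i == b then m else 0.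

Lemma F_feas b x1 x2 : 0 <= x1 -> 0 <= x2 ->
  feasible src dst o d (MU b (x1 + x2)) (F b x1 x2).
Proof.
move=> h1 h2 i; case: b; case: i; split;
  rewrite ?paths_true ?paths_false /F /MU /=;
  rewrite ?big_cons ?big_nil /= ?addr0 //;
  move=> p; rewrite !inE => /orP[]/eqP-> //=.
Qed.

Definition cc (e : E) (x : R) : R := tt_ e + aa e * x.

Lemma ccE x : [/\ cc ea x = x, cc eb x = 1, cc ec x = x & cc ed x = 1].
Proof.
have t1 : tt_ ea = 0 := erefl. have t2 : tt_ eb = 1 := erefl.
have t3 : tt_ ec = 0 := erefl. have t4 : tt_ ed = 1 := erefl.
rewrite /cc /aa t1 t2 t3 t4 ?RplusE ?RmultE ?RminusE ?R0E ?R1E; split; ring.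
Qed.

Lemma pcE (C : E -> R -> R) f :
  [/\ path_cost src dst o d C f Pab = C ea (f true Pab + f false Pa) + C eb (f true Pab),
      path_cost src dst o d C f Pc = C ec (f true Pc + f false Pcd),
      path_cost src dst o d C f Pa = C ea (f true Pab + f false Pa) &
      path_cost src dst o d C f Pcd = C ec (f true Pc + f false Pcd) + C ed (f false Pcd)].
Proof.
have [h1 h2 h3 h4] := loadE f.
by rewrite /path_cost !big_cons !big_nil /= h1 h2 h3 h4 !addr0.
Qed.

Lemma FE b x1 x2 :
  [/\ F b x1 x2 b (if b then Pab else Pa) = x1,
      F b x1 x2 b (if b then Pc else Pcd) = x2 &
      forall p, F b x1 x2 (~~ b) p = 0].
Proof. by case: b. Qed.

Lemma Fvals x1 x2 :
  [/\ F true x1 x2 true Pab = x1, F true x1 x2 true Pc = x2,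
      F true x1 x2 false Pa = 0, F true x1 x2 false Pcd = 0 &
  [/\ F false x1 x2 false Pa = x1, F false x1 x2 false Pcd = x2,
      F false x1 x2 true Pab = 0 & F false x1 x2 true Pc = 0]].
Proof. by []. Qed.

Lemma MU_ge0 b m : 0 <= m -> forall i, 0 <= MU b m i.
Proof. by move=> h i; rewrite /MU; case: ifP. Qed.

Lemma cA x : cc ea x = x. Proof. by have [] := ccE x. Qed.
Lemma cB x : cc eb x = 1. Proof. by have [] := ccE x. Qed.
Lemma cC x : cc ec x = x. Proof. by have [] := ccE x. Qed.
Lemma cD x : cc ed x = 1. Proof. by have [] := ccE x. Qed.

Theorem proposition8 :
  exists (V E I : finType) (src dst : E -> V) (o d : I -> V) (t a : E -> R),
    (forall e, 0 <= t e /\ 0 <= a e) /\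
    ~ (exists tau : E -> R, (forall e, 0 <= tau e) /\
         is_DIOT src dst o d (fun e x => t e + a e * x) tau).
Proof.
exists V, E, bool, src, dst, o, d, tt_, aa.
split.
  move=> e; rewrite /aa /tt_; case: ifP => _; rewrite ?RminusE ?R0E ?R1E; split; lra.
move=> [tau [Htau HD']].
have HD : is_DIOT src dst o d cc tau := HD'.
clear HD'.
have ha := Htau ea. have hb := Htau eb. have hc := Htau ec. have hd := Htau ed.
have [hD1|hD1] := eqVneq (1 + tau ea + tau eb - tau ec) (1/2).
- pose D := 1 + tau ec + tau ed - tau ea.
  have eD : D = 1 + tau ec + tau ed - tau ea by [].
  clearbody D.
  have hD : D != 1/2.
    apply/eqP => hh; lra.
  have [m em] : exists m, m = `|D| + 1 by eexists.
  have n1 : D <= `|D| := ler_norm D.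
  have n2 : - D <= `|D| by rewrite -normrN ler_norm.
  have [x1 ex1] : exists x, x = (m + D)/2 by eexists.
  have [x2 ex2] : exists x, x = (m - D)/2 by eexists.
  have [y1 ey1] : exists x, x = (m + 1/2)/2 by eexists.
  have [y2 ey2] : exists x, x = (m - 1/2)/2 by eexists.
  have [v1 v2 v3 v4 _] := Fvals x1 x2.
  have [_ _ _ _ [w1 w2 w3 w4]] := Fvals x1 x2.
  have Hw : wardrop src dst o d (fun e x => cc e x + tau e) (MU false (x1 + x2)) (F false x1 x2).
    split; first by apply: F_feas; lra.
    have [p1 p2 p3 p4] := pcE (fun e x => cc e x + tau e) (F false x1 x2).
    move=> [] p q; rewrite ?paths_true ?paths_false !inE => /orP[]/eqP-> /orP[]/eqP->;
      rewrite ?p1 ?p2 ?p3 ?p4 ?w1 ?w2 ?w3 ?w4 ?cA ?cB ?cC ?cD => hp; lra.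
  have hmu : forall i, 0 <= MU false (x1 + x2) i.
    by apply: MU_ge0; rewrite RplusE; lra.
  have [_ Hso] := HD _ hmu _ Hw.
  have Hg : feasible src dst o d (MU false (x1 + x2)) (F false y1 y2).
    rewrite (_ : Rplus x1 x2 = Rplus y1 y2); last by rewrite !RplusE; lra.
    apply: F_feas; lra.
  have := Hso _ Hg.
  have [_ _ _ _ [u1 u2 u3 u4]] := Fvals y1 y2.
  rewrite !tc_eq w1 w2 w3 w4 u1 u2 u3 u4 ?cA ?cB ?cC ?cD.
  have hpos : 0 < (D - 1/2) * (D - 1/2).
    have /orP[hl|hl] : (D < 1/2) || (1/2 < D) by rewrite -neq_lt.
      have h : D - 1/2 < 0 by lra.
      by rewrite nmulr_rgt0.
    have h : 0 < D - 1/2 by lra.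
    exact: mulr_gt0.
  nra.
- pose D := 1 + tau ea + tau eb - tau ec.
  have eD : D = 1 + tau ea + tau eb - tau ec by [].
  clearbody D.
  have hD : D != 1/2 by rewrite eD.
  have [m em] : exists m, m = `|D| + 1 by eexists.
  have n1 : D <= `|D| := ler_norm D.
  have n2 : - D <= `|D| by rewrite -normrN ler_norm.
  have [x1 ex1] : exists x, x = (m - D)/2 by eexists.
  have [x2 ex2] : exists x, x = (m + D)/2 by eexists.
  have [y1 ey1] : exists x, x = (m - 1/2)/2 by eexists.
  have [y2 ey2] : exists x, x = (m + 1/2)/2 by eexists.
  have [v1 v2 v3 v4 _] := Fvals x1 x2.
  have Hw : wardrop src dst o d (fun e x => cc e x + tau e) (MU true (x1 + x2)) (F true x1 x2).
    split; first by apply: F_feas; lra.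
    have [p1 p2 p3 p4] := pcE (fun e x => cc e x + tau e) (F true x1 x2).
    move=> [] p q; rewrite ?paths_true ?paths_false !inE => /orP[]/eqP-> /orP[]/eqP->;
      rewrite ?p1 ?p2 ?p3 ?p4 ?v1 ?v2 ?v3 ?v4 ?cA ?cB ?cC ?cD => hp; lra.
  have hmu : forall i, 0 <= MU true (x1 + x2) i.
    by apply: MU_ge0; rewrite RplusE; lra.
  have [_ Hso] := HD _ hmu _ Hw.
  have Hg : feasible src dst o d (MU true (x1 + x2)) (F true y1 y2).
    rewrite (_ : Rplus x1 x2 = Rplus y1 y2); last by rewrite !RplusE; lra.
    apply: F_feas; lra.
  have := Hso _ Hg.
  have [u1 u2 u3 u4 _] := Fvals y1 y2.
  rewrite !tc_eq v1 v2 v3 v4 u1 u2 u3 u4 ?cA ?cB ?cC ?cD.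
  have hpos : 0 < (D - 1/2) * (D - 1/2).
    have /orP[hl|hl] : (D < 1/2) || (1/2 < D) by rewrite -neq_lt.
      have h : D - 1/2 < 0 by lra.
      by rewrite nmulr_rgt0.
    have h : 0 < D - 1/2 by lra.
    exact: mulr_gt0.
  nra.
Qed.
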